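(* For $n\ge1$ the coefficients satisfy the hierarchy $$l_{n1}=nF'',\qquad l_{n2}=\sum_{j=1}^{n-1}j\,\frac{d^2}{dt^2}\log l_{n-j,1},\qquad l_{np}=\sum_{j=1}^{n-1}j\,\frac{d^2}{dt^2}m_{n-j,p-2}\quad(p\ge3).$$ Consequently $$l_{n2}=\tfrac12 n(n-1)\,\frac{F^{(2)}F^{(4)}-(F^{(3)})^2}{(F^{(2)})^2},\qquad l_{n3}=\tfrac1{12}n(n-1)(n-2)\,\frac{d^2}{dt^2}\Big(\frac{F^{(2)}F^{(4)}-(F^{(3)})^2}{(F^{(2)})^3}\Big).$$
   Context: Let $F$ be $C^\infty$ on an open interval $J$ with $F''>0$, and let $L_n(t,N)$ be defined by $L_0=\exp(NF(t))$ and, for $n\ge1$, $$L_n(t,N)=\frac1N\sum_{j=1}^n\frac jN\,\partial_t^2\log L_{n-j}(t,N).$$ For $n\ge1$, expand $L_n(t,N)=\sum_{p\ge1}l_{np}(t)N^{-p}$ in powers of $1/N$. Define $m_{np}$ by $$\sum_{p\ge1}m_{np}N^{-p}=\log\Big(1+\sum_{p\ge1}(l_{n,p+1}/l_{n1})N^{-p}\Big).$$ *)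

(* Defs.v *)
From Stdlib Require Import Reals.
From Coquelicot Require Import Coquelicot.
Open Scope R_scope.

(* Formal power series in eps = 1/N whose coefficients are functions of t:
   a p t = coefficient of eps^p = N^{-p}. *)
Definition fps := nat -> R -> R.

Definition fps_zero : fps := fun _ _ => 0.
Definition fps_one : fps := fun p _ => if Nat.eqb p 0 then 1 else 0.

Definition fps_mul (a b : fps) : fps :=
  fun p t => sum_f_R0 (fun i => a i t * b (p - i)%nat t) p.

Fixpoint fps_pow (a : fps) (k : nat) : fps :=
  match k with
  | O => fps_one
  | S k' => fps_mul a (fps_pow a k')
  end.

Definition fps_D (a : fps) : fps := fun p t => Derive (a p) t.

(* Inverse of a series with invertible constant term a0:
   1/a = a0^{-1} * sum_k W^k with W = -(a - a0)/a0 (geometric series;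
   W^k has valuation >= k, so the truncation k <= p is exact). *)
Definition fps_inv (a : fps) : fps :=
  let W : fps := fun p t => if Nat.eqb p 0 then 0 else - a p t / a 0%nat t in
  fun p t => / a 0%nat t * sum_f_R0 (fun k => fps_pow W k p t) p.

Definition fps_log1p (A : fps) : fps :=
  fun p t => sum_f_R0 (fun k => match k with
                                | O => 0
                                | S k' => (-1) ^ k' / INR k * fps_pow A k p t
                                end) p.

(* For L = sum_{p>=1} l_p eps^p (valuation 1, l_1 invertible), the formal
   d^2/dt^2 log L, computed as d/dt (dL/dt / L); the common factor eps
   (independent of t) cancels in the quotient, so we divide the shifted
   series S = L/eps = sum_p l_{p+1} eps^p. *)
Definition fps_DDlog (L : fps) : fps :=
  let Sh : fps := fun p => L (S p) in
  fps_D (fps_mul (fps_D Sh) (fps_inv Sh)).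

(* One step of the recursion
     L_n = (1/N) sum_{j=1}^n (j/N) d_t^2 log L_{n-j},
   given the history h k = L_k for 1 <= k <= n-1.
   The j = n term uses d_t^2 log L_0 = d_t^2 (N F) = N F'', giving n F'' eps.
   The terms 1 <= j <= n-1 contribute j eps^2 (d_t^2 log L_{n-j}).
   (The j = 0 summand below is multiplied by INR 0 = 0.) *)
Definition L_step (F : R -> R) (n : nat) (h : nat -> fps) : fps :=
  fun p t =>
    (if Nat.eqb p 1 then INR n * Derive_n F 2 t else 0)
    + sum_f_R0 (fun j => INR j *
                  match p with
                  | S (S q) => fps_DDlog (h (n - j)%nat) q t
                  | _ => 0
                  end) (n - 1).

(* L_hist F n k = L_k (as a series in 1/N) for 1 <= k <= n. *)
Fixpoint L_hist (F : R -> R) (n : nat) : nat -> fps :=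
  match n with
  | O => fun _ => fps_zero
  | S n' => let h := L_hist F n' in
            fun k => if Nat.leb k n' then h k else L_step F (S n') h
  end.

Definition L_ser (F : R -> R) (n : nat) : fps := L_hist F n n.

Definition l_coef (F : R -> R) (n p : nat) (t : R) : R := L_ser F n p t.

Definition m_coef (F : R -> R) (n p : nat) (t : R) : R :=
  fps_log1p (fun q s => if Nat.eqb q 0 then 0
                        else l_coef F n (S q) s / l_coef F n 1 s) p t.

(* Main.v *)
Require Import Defs.
From Stdlib Require Import Reals Lra Lia.
From Coquelicot Require Import Coquelicot.
Open Scope R_scope.

Lemma sum_zero (f : nat -> R) N : (forall i, (i <= N)%nat -> f i = 0) -> sum_f_R0 f N = 0.
Proof.
  induction N; intros H; simpl.
  - apply H; lia.
  - rewrite IHN by (intros; apply H; lia). rewrite H by lia. ring.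
Qed.

Lemma sum_swap (f : nat -> nat -> R) N M :
  sum_f_R0 (fun i => sum_f_R0 (fun k => f i k) N) M =
  sum_f_R0 (fun k => sum_f_R0 (fun i => f i k) M) N.
Proof.
  induction M; simpl.
  - apply sum_eq; auto.
  - rewrite IHM. rewrite <- plus_sum. apply sum_eq; intros; simpl; ring.
Qed.

Lemma sum_shift (f : nat -> R) N : sum_f_R0 f (S N) = f 0%nat + sum_f_R0 (fun i => f (S i)) N.
Proof. rewrite decomp_sum by lia. reflexivity. Qed.

Lemma sum_rev (f : nat -> R) p : sum_f_R0 f p = sum_f_R0 (fun i => f (p - i)%nat) p.
Proof.
  induction p.
  - simpl. reflexivity.
  - rewrite (sum_shift (fun i => f (S p - i)%nat)).
    simpl sum_f_R0 at 1. rewrite IHp.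
    replace (S p - 0)%nat with (S p) by lia. simpl. ring.
Qed.

Lemma sum_tri (g : nat -> nat -> R) p :
  sum_f_R0 (fun m => sum_f_R0 (fun i => g i m) m) p =
  sum_f_R0 (fun i => sum_f_R0 (fun k => g i (i + k)%nat) (p - i)) p.
Proof.
  induction p.
  - simpl. reflexivity.
  - change (sum_f_R0 (fun m => sum_f_R0 (fun i => g i m) m) (S p)) with
      (sum_f_R0 (fun m => sum_f_R0 (fun i => g i m) m) p + sum_f_R0 (fun i => g i (S p)) (S p)).
    rewrite IHp.
    change (sum_f_R0 (fun i => sum_f_R0 (fun k => g i (i + k)%nat) (S p - i)) (S p)) with
      (sum_f_R0 (fun i => sum_f_R0 (fun k => g i (i + k)%nat) (S p - i)) p +
       sum_f_R0 (fun k => g (S p) (S p + k)%nat) (S p - S p)).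
    replace (S p - S p)%nat with 0%nat by lia. simpl (sum_f_R0 _ 0).
    replace (S p + 0)%nat with (S p) by lia.
    transitivity (sum_f_R0 (fun i => sum_f_R0 (fun k => g i (i + k)%nat) (p - i) + g i (S p)) p + g (S p) (S p)).
    + rewrite plus_sum. simpl. ring.
    + f_equal. apply sum_eq; intros i Hi.
      replace (S p - i)%nat with (S (p - i)) by lia. simpl.
      replace (i + S (p - i))%nat with (S p) by lia. reflexivity.
    + now rewrite Nat.add_0_r.
Qed.

Lemma sum_telescope (f : nat -> R) N : sum_f_R0 (fun k => f k - f (S k)) N = f 0%nat - f (S N).
Proof. induction N; simpl; [|rewrite IHN]; ring. Qed.

Lemma sum_extend (f : nat -> R) m N : (m <= N)%nat -> (forall k, (m < k <= N)%nat -> f k = 0) ->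
  sum_f_R0 f m = sum_f_R0 f N.
Proof.
  intros Hm. induction N; intros H.
  - replace m with 0%nat by lia. reflexivity.
  - destruct (Nat.eq_dec m (S N)) as [->|Hne]; [reflexivity|].
    simpl. rewrite <- IHN by (try lia; intros; apply H; lia). rewrite H by lia. ring.
Qed.

Lemma sum_scal_l (f : nat -> R) c N : sum_f_R0 (fun i => c * f i) N = c * sum_f_R0 f N.
Proof. induction N; simpl; [|rewrite IHN]; ring. Qed.

Lemma sum_opp (f : nat -> R) N : sum_f_R0 (fun i => - f i) N = - sum_f_R0 f N.
Proof. induction N; simpl; [|rewrite IHN]; ring. Qed.

Lemma sum_scal_r (f : nat -> R) c N : sum_f_R0 (fun i => f i * c) N = sum_f_R0 f N * c.
Proof. induction N; simpl; [|rewrite IHN]; ring. Qed.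

Lemma leb_Sn_n n : Nat.leb (S n) n = false.
Proof. apply Nat.leb_gt. lia. Qed.


Lemma mul_ext (a a' b b' : fps) p y :
  (forall i, (i <= p)%nat -> a i y = a' i y) -> (forall i, (i <= p)%nat -> b i y = b' i y) ->
  fps_mul a b p y = fps_mul a' b' p y.
Proof.
  intros Ha Hb. unfold fps_mul. apply sum_eq; intros i Hi.
  rewrite Ha, Hb by lia. reflexivity.
Qed.

Lemma mul_comm (a b : fps) p y : fps_mul a b p y = fps_mul b a p y.
Proof.
  unfold fps_mul. rewrite sum_rev. apply sum_eq; intros i Hi.
  replace (p - (p - i))%nat with i by lia. ring.
Qed.

Lemma mul_assoc (a b c : fps) p y :
  fps_mul a (fps_mul b c) p y = fps_mul (fps_mul a b) c p y.
Proof.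
  unfold fps_mul.
  transitivity (sum_f_R0 (fun m => sum_f_R0 (fun i => a i y * b (m - i)%nat y * c (p - m)%nat y) m) p).
  - rewrite sum_tri. apply sum_eq; intros i Hi.
    rewrite <- sum_scal_l. apply sum_eq; intros k Hk.
    replace (i + k - i)%nat with k by lia. replace (p - (i + k))%nat with (p - i - k)%nat by lia. ring.
  - apply sum_eq; intros m Hm. rewrite <- sum_scal_r. reflexivity.
Qed.

Lemma mul_one_l (b : fps) p y : fps_mul fps_one b p y = b p y.
Proof.
  unfold fps_mul. destruct p.
  - simpl. unfold fps_one. simpl. ring.
  - rewrite sum_shift. rewrite sum_zero.
    + unfold fps_one; simpl. replace (S p - 0)%nat with (S p) by lia. ring.
    + intros i Hi. unfold fps_one. simpl. ring.
Qed.

Lemma mul_sum_r (a : fps) (B : nat -> fps) N p y :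
  fps_mul a (fun q z => sum_f_R0 (fun k => B k q z) N) p y = sum_f_R0 (fun k => fps_mul a (B k) p y) N.
Proof.
  unfold fps_mul.
  transitivity (sum_f_R0 (fun i => sum_f_R0 (fun k => a i y * B k (p - i)%nat y) N) p).
  - apply sum_eq; intros i _. rewrite sum_scal_l. reflexivity.
  - rewrite sum_swap. reflexivity.
Qed.


Lemma pow_val (a : fps) y : a 0%nat y = 0 -> forall k p, (p < k)%nat -> fps_pow a k p y = 0.
Proof.
  intros H0 k. induction k; intros p Hp; [lia|].
  simpl. unfold fps_mul. apply sum_zero. intros i Hi.
  destruct i.
  - rewrite H0. ring.
  - rewrite IHk by lia. ring.
Qed.

Lemma pow_opp (w a : fps) y : (forall i, w i y = - a i y) ->
  forall k p, fps_pow w k p y = (-1) ^ k * fps_pow a k p y.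
Proof.
  intros H k. induction k; intros p.
  - simpl. ring.
  - simpl fps_pow. unfold fps_mul. rewrite <- sum_scal_l. apply sum_eq; intros i Hi.
    rewrite H, IHk. simpl. ring.
Qed.

Definition Wof (s : fps) : fps := fun p z => if Nat.eqb p 0 then 0 else - s p z / s 0%nat z.

Lemma inv_unfold s m y : fps_inv s m y = / s 0%nat y * sum_f_R0 (fun k => fps_pow (Wof s) k m y) m.
Proof. reflexivity. Qed.

Lemma inv_spec (s : fps) y : s 0%nat y <> 0 -> forall q, fps_mul s (fps_inv s) q y = fps_one q y.
Proof.
  intros Hs q.
  set (W := Wof s).
  set (G := fun m z => sum_f_R0 (fun k => fps_pow W k m z) q).
  assert (W0 : W 0%nat y = 0) by reflexivity.
  transitivity (fps_mul fps_one G q y - fps_mul W G q y).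
  - unfold fps_mul. rewrite <- minus_sum. apply sum_eq; intros i Hi.
    rewrite inv_unfold. fold W.
    rewrite (sum_extend _ (q - i) q) by (try lia; intros k Hk; apply pow_val; auto; lia).
    unfold G. destruct i.
    + unfold fps_one, W, Wof; simpl. field. auto.
    + unfold fps_one, W, Wof; simpl. field. auto.
  - rewrite mul_one_l. unfold G at 2. rewrite mul_sum_r.
    change (fun k => fps_mul W (fps_pow W k) q y) with (fun k => fps_pow W (S k) q y).
    unfold G. rewrite <- minus_sum. rewrite (sum_telescope (fun k => fps_pow W k q y)).
    rewrite (pow_val W y W0 (S q) q) by lia. simpl. ring.
Qed.


Lemma ex_derive_sum (g : nat -> R -> R) N x : (forall k, (k <= N)%nat -> ex_derive (g k) x) ->
  ex_derive (fun z => sum_f_R0 (fun k => g k z) N) x.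
Proof.
  induction N; intros H; simpl.
  - apply H; lia.
  - apply (ex_derive_plus (fun z => sum_f_R0 (fun k => g k z) N) (g (S N))). apply IHN; intros; apply H; lia. apply H; lia.
Qed.

Lemma Derive_sum (g : nat -> R -> R) N x : (forall k, (k <= N)%nat -> ex_derive (g k) x) ->
  Derive (fun z => sum_f_R0 (fun k => g k z) N) x = sum_f_R0 (fun k => Derive (g k) x) N.
Proof.
  induction N; intros H; simpl.
  - reflexivity.
  - rewrite Derive_plus. rewrite IHN. reflexivity.
    intros; apply H; lia. apply ex_derive_sum; intros; apply H; lia. apply H; lia.
Qed.

Lemma exd_mul (a b : fps) x : (forall i, ex_derive (a i) x) -> (forall i, ex_derive (b i) x) ->
  forall p, ex_derive (fps_mul a b p) x.
Proof.
  intros Ha Hb p. unfold fps_mul. apply (ex_derive_sum (fun i z => a i z * b (p - i)%nat z)).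
  intros k _. apply ex_derive_mult; auto.
Qed.

Lemma D_mul (a b : fps) x : (forall i, ex_derive (a i) x) -> (forall i, ex_derive (b i) x) ->
  forall p, Derive (fps_mul a b p) x = fps_mul (fps_D a) b p x + fps_mul a (fps_D b) p x.
Proof.
  intros Ha Hb p. unfold fps_mul at 1. rewrite (Derive_sum (fun i z => a i z * b (p - i)%nat z)).
  - unfold fps_mul, fps_D. rewrite <- plus_sum. apply sum_eq; intros i _.
    rewrite Derive_mult; auto.
  - intros k _. apply ex_derive_mult; auto.
Qed.

Lemma exd_one p x : ex_derive (fps_one p) x.
Proof. unfold fps_one. apply ex_derive_const. Qed.

Lemma exd_pow (a : fps) x : (forall i, ex_derive (a i) x) -> forall k p, ex_derive (fps_pow a k p) x.
Proof.
  intros Ha k. induction k; intros p; simpl.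
  - apply exd_one.
  - apply exd_mul; auto.
Qed.

Lemma mul_scal_r (a b : fps) c p y : fps_mul a (fun q z => c * b q z) p y = c * fps_mul a b p y.
Proof.
  unfold fps_mul. rewrite <- sum_scal_l. apply sum_eq; intros; ring.
Qed.

Lemma mul_zero_r (a b : fps) p y : (forall i, b i y = 0) -> fps_mul a b p y = 0.
Proof. intros H. unfold fps_mul. apply sum_zero. intros i _. rewrite H. ring. Qed.

Lemma mul_lcomm (a b c : fps) p y : fps_mul a (fps_mul b c) p y = fps_mul b (fps_mul a c) p y.
Proof.
  rewrite mul_assoc. rewrite (mul_ext (fps_mul a b) (fps_mul b a) c c).
  - rewrite <- mul_assoc. reflexivity.
  - intros; apply mul_comm.
  - auto.
Qed.

Lemma D_pow (a : fps) x : (forall i, ex_derive (a i) x) -> forall m p,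
  Derive (fps_pow a (S m) p) x = INR (S m) * fps_mul (fps_D a) (fps_pow a m) p x.
Proof.
  intros Ha m. induction m; intros p.
  - change (fps_pow a 1 p) with (fps_mul a fps_one p).
    assert (H1 : forall i, ex_derive (fps_one i) x) by (intros; apply exd_one).
    rewrite (D_mul a fps_one x Ha H1).
    assert (H2 : forall i, fps_D fps_one i x = 0) by (intros i; unfold fps_D, fps_one; apply Derive_const).
    rewrite (mul_zero_r a (fps_D fps_one) p x H2). simpl. ring.
  - change (fps_pow a (S (S m)) p) with (fps_mul a (fps_pow a (S m)) p).
    rewrite D_mul; auto.
    + rewrite (mul_ext a a (fps_D (fps_pow a (S m))) (fun q z => INR (S m) * fps_mul (fps_D a) (fps_pow a m) q z)).
      * rewrite mul_scal_r. rewrite mul_lcomm. change (fps_mul a (fps_pow a m)) with (fps_pow a (S m)).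
        rewrite !S_INR. ring.
      * auto.
      * intros i _. unfold fps_D. apply IHm.
    + apply exd_pow; auto.
Qed.


Definition Aof (s : fps) : fps := fun q y => if Nat.eqb q 0 then 0 else s q y / s 0%nat y.

Lemma DA_0 s x : Derive (Aof s 0%nat) x = 0.
Proof. unfold Aof. simpl. apply Derive_const. Qed.

Lemma DA_S s x j : ex_derive (s (S j)) x -> ex_derive (s 0%nat) x -> s 0%nat x <> 0 ->
  Derive (Aof s (S j)) x = (Derive (s (S j)) x * s 0%nat x - s (S j) x * Derive (s 0%nat) x) / (s 0%nat x)^2.
Proof.
  intros H1 H2 H3. unfold Aof. simpl.
  change (fun y => s (S j) y / s 0%nat y) with (fun y => s (S j) y * / s 0%nat y).
  rewrite Derive_mult; auto.
  - rewrite Derive_inv; auto. field. auto.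
  - apply ex_derive_inv; auto.
Qed.

Lemma exd_A s x : (forall i, ex_derive (s i) x) -> s 0%nat x <> 0 -> forall i, ex_derive (Aof s i) x.
Proof.
  intros H H0 i. unfold Aof. destruct i; simpl.
  - apply ex_derive_const.
  - apply (ex_derive_mult (s (S i)) (fun y => / s 0%nat y)); auto. apply ex_derive_inv; auto.
Qed.

Lemma core (s : fps) x : (forall i, ex_derive (s i) x) -> s 0%nat x <> 0 ->
  forall q, (1 <= q)%nat ->
  fps_mul (fps_D s) (fps_inv s) q x = Derive (fps_log1p (Aof s) q) x.
Proof.
  intros Hex Hs q Hq.
  set (A := Aof s). set (W := Wof s).
  assert (HA : forall i, ex_derive (A i) x) by (apply exd_A; auto).
  assert (HWA : forall i, W i x = - A i x).
  { intros [|i]; unfold W, A, Wof, Aof; simpl; field; auto. }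
  destruct q as [|q']; [lia|].
  set (G := fun m z => sum_f_R0 (fun k => fps_pow W k m z) q').
  transitivity (fps_mul (fps_D A) G (S q') x).
  2:{
    unfold fps_log1p.
    set (g := fun k z => match k with O => 0 | S k' => (-1) ^ k' / INR k * fps_pow A k (S q') z end).
    change (fun t => sum_f_R0 (fun k => match k with O => 0 | S k' => (-1) ^ k' / INR k * fps_pow A k (S q') t end) (S q'))
      with (fun z => sum_f_R0 (fun k => g k z) (S q')).
    rewrite Derive_sum.
    2:{ intros [|k] _; unfold g. apply ex_derive_const.
        apply ex_derive_scal. apply exd_pow; auto. }
    rewrite sum_shift. unfold g at 1. rewrite Derive_const, Rplus_0_l.
    unfold G. rewrite mul_sum_r. apply sum_eq; intros k _.
    unfold g. rewrite Derive_scal. rewrite D_pow by auto.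
    rewrite (mul_ext (fps_D A) (fps_D A) (fps_pow W k) (fun i z => (-1) ^ k * fps_pow A k i z)).
    - rewrite mul_scal_r. field. apply not_0_INR. lia.
    - auto.
    - intros i _. apply pow_opp. auto. }
  transitivity (Derive (s 0%nat) x / s 0%nat x * fps_mul s (fps_inv s) (S q') x + fps_mul (fps_D A) G (S q') x).
  2:{ rewrite inv_spec by auto. unfold fps_one. simpl. ring. }
  unfold fps_mul at 1 2 3. rewrite <- sum_scal_l, <- plus_sum. apply sum_eq; intros i Hi.
  unfold fps_D. destruct i as [|j].
  - unfold A. rewrite DA_0. field. auto.
  - unfold A. rewrite DA_S by auto.
    assert (HG : G (S q' - S j)%nat x = s 0%nat x * fps_inv s (S q' - S j)%nat x).
    { rewrite inv_unfold. unfold G. fold W.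
      rewrite (sum_extend _ (S q' - S j) q').
      - field. auto.
      - lia.
      - intros k Hk. apply pow_val. reflexivity. lia. }
    rewrite HG. field. auto.
Qed.


Definition Ck (U : R -> Prop) k (f : R -> R) :=
  forall k', (k' <= k)%nat -> forall x, U x -> ex_derive_n f k' x.
Definition sm U f := forall k, Ck U k f.

Lemma Dn_S h k x : Derive_n h (S k) x = Derive_n (Derive h) k x.
Proof.
  revert x. induction k; intros x.
  - reflexivity.
  - simpl. apply Derive_ext. intros; apply IHk.
Qed.

Lemma exdn_S h k x : ex_derive h x -> ex_derive_n (Derive h) k x -> ex_derive_n h (S k) x.
Proof.
  intros H1 H2. destruct k.
  - exact H1.
  - simpl in *. apply (ex_derive_ext (Derive_n (Derive h) k)); auto.
    intros; symmetry; apply (Dn_S h k).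
Qed.

Lemma exdn_S_inv h k x : ex_derive_n h (S k) x -> ex_derive_n (Derive h) k x.
Proof.
  intros H. destruct k.
  - exact I.
  - simpl in *. apply (ex_derive_ext (Derive_n h (S k))); auto.
    intros; apply (Dn_S h k).
Qed.

Lemma Ck_0 U f : Ck U 0 f.
Proof. intros k' Hk x _. replace k' with 0%nat by lia. exact I. Qed.

Lemma Ck_S U k f : Ck U (S k) f <-> (forall x, U x -> ex_derive f x) /\ Ck U k (Derive f).
Proof.
  split.
  - intros H. split.
    + intros x Hx. apply (H 1%nat); auto. lia.
    + intros k' Hk x Hx. apply exdn_S_inv. apply H; auto. lia.
  - intros [H1 H2] k' Hk x Hx. destruct k'. exact I.
    apply exdn_S; auto. apply H2; auto. lia.
Qed.

Lemma Ck_mono U k f : Ck U (S k) f -> Ck U k f.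
Proof. intros H k' Hk. apply H. lia. Qed.

Lemma Ck_ext U k f g : open U -> (forall x, U x -> f x = g x) -> Ck U k f -> Ck U k g.
Proof.
  intros HU He H k' Hk x Hx. apply (ex_derive_n_ext_loc f). 
  - apply (filter_imp U); auto. 
  - apply H; auto.
Qed.

Lemma Ck_const U k c : Ck U k (fun _ => c).
Proof. intros k' _ x _. apply ex_derive_n_const. Qed.

Section S.
Variable U : R -> Prop.
Hypothesis HU : open U.

Lemma Ck_plus k : forall f g, Ck U k f -> Ck U k g -> Ck U k (fun x => f x + g x).
Proof.
  induction k; intros f g Hf Hg. apply Ck_0.
  apply Ck_S in Hf as [Hf1 Hf2]. apply Ck_S in Hg as [Hg1 Hg2].
  apply Ck_S. split.
  - intros x Hx. apply (ex_derive_plus f g); auto.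
  - apply (Ck_ext U k (fun x => Derive f x + Derive g x)); auto.
    intros x Hx. symmetry. apply Derive_plus; auto.
Qed.

Lemma Ck_mult k : forall f g, Ck U k f -> Ck U k g -> Ck U k (fun x => f x * g x).
Proof.
  induction k; intros f g Hf Hg. apply Ck_0.
  pose proof (Ck_mono _ _ _ Hf) as Hf0. pose proof (Ck_mono _ _ _ Hg) as Hg0.
  apply Ck_S in Hf as [Hf1 Hf2]. apply Ck_S in Hg as [Hg1 Hg2].
  apply Ck_S. split.
  - intros x Hx. apply ex_derive_mult; auto.
  - apply (Ck_ext U k (fun x => Derive f x * g x + f x * Derive g x)); auto.
    + intros x Hx. symmetry. apply Derive_mult; auto.
    + apply Ck_plus; auto.
Qed.

Lemma Ck_inv k : forall f, (forall x, U x -> f x <> 0) -> Ck U k f -> Ck U k (fun x => / f x).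
Proof.
  induction k; intros f Hnz Hf. apply Ck_0.
  pose proof (Ck_mono _ _ _ Hf) as Hf0.
  apply Ck_S in Hf as [Hf1 Hf2].
  apply Ck_S. split.
  - intros x Hx. apply ex_derive_inv; auto.
  - apply (Ck_ext U k (fun x => (-1) * (Derive f x * (/ f x * / f x)))); auto.
    + intros x Hx. rewrite Derive_inv; auto. field. auto.
    + apply Ck_mult. apply Ck_const. apply Ck_mult; auto. apply Ck_mult; auto.
Qed.

Lemma sm_plus f g : sm U f -> sm U g -> sm U (fun x => f x + g x).
Proof. intros Hf Hg k. apply Ck_plus; auto. Qed.
Lemma sm_mult f g : sm U f -> sm U g -> sm U (fun x => f x * g x).
Proof. intros Hf Hg k. apply Ck_mult; auto. Qed.
Lemma sm_inv f : (forall x, U x -> f x <> 0) -> sm U f -> sm U (fun x => / f x).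
Proof. intros Hn Hf k. apply Ck_inv; auto. Qed.
Lemma sm_const c : sm U (fun _ => c).
Proof. intros k. apply Ck_const. Qed.
Lemma sm_ext f g : (forall x, U x -> f x = g x) -> sm U f -> sm U g.
Proof. intros He Hf k. apply (Ck_ext U k f); auto. Qed.
Lemma sm_Derive f : sm U f -> sm U (Derive f).
Proof. intros Hf k. apply (Ck_S U k f). apply Hf. Qed.
Lemma sm_exd f x : sm U f -> U x -> ex_derive f x.
Proof. intros Hf Hx. apply (Ck_S U 0 f). apply Hf. auto. Qed.
Lemma sm_div f g : (forall x, U x -> g x <> 0) -> sm U f -> sm U g -> sm U (fun x => f x / g x).
Proof. intros. apply (sm_mult f (fun x => / g x)); auto. apply sm_inv; auto. Qed.

Lemma sm_sum (g : nat -> R -> R) N : (forall k, (k <= N)%nat -> sm U (g k)) ->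
  sm U (fun z => sum_f_R0 (fun k => g k z) N).
Proof.
  induction N; intros H.
  - apply (sm_ext (g 0%nat)).
    + intros; reflexivity.
    + apply H; lia.
  - change (sm U (fun z => sum_f_R0 (fun k => g k z) N + g (S N) z)).
    apply (sm_plus (fun z => sum_f_R0 (fun k => g k z) N) (g (S N))).
    + apply IHN; intros; apply H; lia.
    + apply H; lia.
Qed.

Lemma sm_sum_weak (c : nat -> R) (g : nat -> R -> R) N :
  (forall k, (k <= N)%nat -> c k = 0 \/ sm U (g k)) ->
  sm U (fun z => sum_f_R0 (fun k => c k * g k z) N).
Proof.
  intros H. apply (sm_sum (fun k z => c k * g k z)). intros k Hk.
  destruct (H k Hk) as [H0|H1].
  - apply (sm_ext (fun _ => 0)). intros; rewrite H0; ring. apply sm_const.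
  - apply (sm_mult (fun _ => c k) (g k)); auto. apply sm_const.
Qed.

End S.


Section T.
Variable U : R -> Prop.
Hypothesis HU : open U.

Definition smf (a : fps) := forall p, sm U (a p).

Lemma smf_mul a b : smf a -> smf b -> smf (fps_mul a b).
Proof.
  intros Ha Hb p. unfold fps_mul.
  apply (sm_sum U HU (fun i t => a i t * b (p - i)%nat t)). intros k _.
  apply sm_mult; auto.
Qed.

Lemma smf_one : smf fps_one.
Proof. intros p. unfold fps_one. apply sm_const. Qed.

Lemma smf_pow a : smf a -> forall k, smf (fps_pow a k).
Proof. intros Ha k. induction k; simpl. apply smf_one. apply smf_mul; auto. Qed.

Lemma smf_D a : smf a -> smf (fps_D a).
Proof. intros Ha p. unfold fps_D. apply sm_Derive; auto. Qed.

Lemma smf_W s : smf s -> (forall x, U x -> s 0%nat x <> 0) -> smf (Wof s).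
Proof.
  intros Hs Hn p. destruct p.
  - apply (sm_ext U HU (fun _ => 0)). intros; reflexivity. apply sm_const.
  - apply (sm_ext U HU (fun z => (-1) * (s (S p) z / s 0%nat z))).
    + intros x Hx. unfold Wof. simpl. field. auto.
    + apply sm_mult; auto. apply sm_const. apply sm_div; auto.
Qed.

Lemma smf_inv s : smf s -> (forall x, U x -> s 0%nat x <> 0) -> smf (fps_inv s).
Proof.
  intros Hs Hn m.
  apply (sm_ext U HU (fun t => / s 0%nat t * sum_f_R0 (fun k => fps_pow (Wof s) k m t) m)).
  - intros; symmetry; apply inv_unfold.
  - apply sm_mult; auto. apply sm_inv; auto.
    apply (sm_sum U HU (fun k t => fps_pow (Wof s) k m t)). intros k _.
    apply smf_pow. apply smf_W; auto.
Qed.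

Lemma smf_DDlog L : smf L -> (forall x, U x -> L 1%nat x <> 0) -> smf (fps_DDlog L).
Proof.
  intros HL Hn. unfold fps_DDlog. apply smf_D. apply smf_mul.
  - apply smf_D. intros p; apply HL.
  - apply smf_inv. intros p; apply HL. auto.
Qed.

End T.


Lemma L_ser_S F n : L_ser F (S n) = L_step F (S n) (L_hist F n).
Proof. unfold L_ser. cbn [L_hist]. rewrite leb_Sn_n. reflexivity. Qed.

Lemma L_hist_stable F n k : (1 <= k <= n)%nat -> L_hist F n k = L_ser F k.
Proof.
  revert k. induction n; intros k Hk; [lia|].
  simpl. destruct (Nat.leb k n) eqn:E.
  - apply Nat.leb_le in E. apply IHn. lia.
  - apply Nat.leb_gt in E. replace k with (S n) by lia. rewrite L_ser_S. reflexivity.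
Qed.


Lemma L_formula F n p x : (1 <= n)%nat ->
  L_ser F n p x = (if Nat.eqb p 1%nat then INR n * Derive_n F 2 x else 0) +
    sum_f_R0 (fun j => INR j * match p with S (S q) => fps_DDlog (L_ser F (n - j)) q x | _ => 0 end) (n - 1).
Proof.
  intros Hn. destruct n as [|n']; [lia|]. rewrite L_ser_S. unfold L_step. f_equal.
  apply sum_eq; intros j Hj. destruct j.
  - simpl. ring.
  - rewrite L_hist_stable by lia. reflexivity.
Qed.

Lemma L_1 F n x : (1 <= n)%nat -> L_ser F n 1%nat x = INR n * Derive_n F 2 x.
Proof.
  intros Hn. rewrite L_formula by auto. simpl. rewrite sum_zero. ring. intros; ring.
Qed.

Section T.
Variable U : R -> Prop.
Hypothesis HU : open U.
Variable F : R -> R.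
Hypothesis HF : forall k x, U x -> ex_derive_n F k x.
Hypothesis HF2 : forall x, U x -> 0 < Derive_n F 2 x.

Lemma sm_F : sm U F.
Proof. intros k k' _ x Hx. apply HF; auto. Qed.

Lemma sm_Fn k : sm U (Derive_n F k).
Proof.
  induction k.
  - apply (sm_ext U HU F). intros; reflexivity. apply sm_F.
  - apply (sm_ext U HU (Derive (Derive_n F k))). intros; reflexivity. apply sm_Derive; auto.
Qed.

Lemma L1_nz n x : (1 <= n)%nat -> U x -> L_ser F n 1%nat x <> 0.
Proof.
  intros Hn Hx. rewrite L_1 by auto. apply Rgt_not_eq. apply Rmult_lt_0_compat.
  apply lt_0_INR; lia. apply HF2; auto.
Qed.

Lemma smf_L N : forall n, (1 <= n <= N)%nat -> smf U (L_ser F n).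
Proof.
  induction N; intros n Hn; [lia|].
  intros p.
  apply (sm_ext U HU (fun x => (if Nat.eqb p 1%nat then INR n * Derive_n F 2 x else 0) +
    sum_f_R0 (fun j => INR j * match p with S (S q) => fps_DDlog (L_ser F (n - j)) q x | _ => 0 end) (n - 1))).
  { intros; symmetry; apply L_formula; lia. }
  apply sm_plus; auto.
  - destruct (Nat.eqb p 1).
    + apply sm_mult; auto. apply sm_const. apply sm_Fn.
    + apply sm_const.
  - apply (sm_sum_weak U HU INR (fun j x => match p with S (S q) => fps_DDlog (L_ser F (n - j)) q x | _ => 0 end)).
    intros j Hj. destruct j. left; reflexivity. right.
    destruct p as [|[|q]].
    + apply sm_const.
    + apply sm_const.
    + apply (smf_DDlog U HU (L_ser F (n - S j))).
      * apply IHN. lia.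
      * intros; apply L1_nz; auto. lia.
Qed.

Lemma smf_L' n : (1 <= n)%nat -> smf U (L_ser F n).
Proof. intros; apply (smf_L n); lia. Qed.

End T.


Lemma sum_INR m : sum_f_R0 (fun j => INR j) m = INR m * (INR m + 1) / 2.
Proof. induction m. simpl. field. rewrite tech5, IHm, S_INR. field. Qed.

Lemma sum_sq m : sum_f_R0 (fun j => INR j * INR j) m = INR m * (INR m + 1) * (2 * INR m + 1) / 6.
Proof. induction m. simpl. field. rewrite tech5, IHm, S_INR. field. Qed.

Lemma Dln g y : ex_derive g y -> 0 < g y -> Derive (fun s => ln (g s)) y = Derive g y / g y.
Proof.
  intros H1 H2. rewrite (Derive_comp ln g y).
  - rewrite (is_derive_unique ln (g y) (/ g y)). reflexivity. apply is_derive_ln; auto.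
  - exists (/ g y). apply is_derive_ln; auto.
  - auto.
Qed.

Section T.
Variable U : R -> Prop.
Hypothesis HU : open U.
Variable F : R -> R.
Hypothesis HF : forall k x, U x -> ex_derive_n F k x.
Hypothesis HF2 : forall x, U x -> 0 < Derive_n F 2 x.

Lemma loc x (P : R -> Prop) : U x -> (forall y, U y -> P y) -> locally x P.
Proof. intros Hx H. apply (filter_imp U); auto. Qed.

Lemma DDlog_q k q t : (1 <= k)%nat -> (1 <= q)%nat -> U t ->
  fps_DDlog (L_ser F k) q t = Derive_n (m_coef F k q) 2 t.
Proof.
  intros Hk Hq Ht. unfold fps_DDlog. cbv zeta. unfold fps_D at 1.
  change (Derive_n (m_coef F k q) 2 t) with
    (Derive (fun y => Derive (fps_log1p (Aof (fun p => L_ser F k (S p))) q) y) t).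
  apply Derive_ext_loc. apply loc; auto. intros y Hy.
  apply core; auto.
  - intros i. apply (sm_exd U). apply (smf_L' U HU F HF HF2). auto. auto.
  - apply (L1_nz U F HF2); auto.
Qed.

Lemma DDlog_0 k t : (1 <= k)%nat -> U t ->
  fps_DDlog (L_ser F k) 0%nat t = Derive_n (fun s => ln (L_ser F k 1%nat s)) 2 t.
Proof.
  intros Hk Ht. unfold fps_DDlog. cbv zeta. unfold fps_D at 1.
  change (Derive_n (fun s => ln (L_ser F k 1%nat s)) 2 t) with
    (Derive (fun y => Derive (fun s => ln (L_ser F k 1%nat s)) y) t).
  apply Derive_ext_loc. apply loc; auto. intros y Hy.
  rewrite Dln.
  - unfold fps_mul. simpl sum_f_R0. rewrite inv_unfold. simpl. unfold fps_D, fps_one. simpl.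
    field. apply (L1_nz U F HF2); auto.
  - apply (sm_exd U). apply (smf_L' U HU F HF HF2). auto. auto.
  - rewrite L_1 by auto. apply Rmult_lt_0_compat. apply lt_0_INR; lia. apply HF2; auto.
Qed.

Definition Qf x := (Derive_n F 2 x * Derive_n F 4 x - (Derive_n F 3 x) ^ 2) / (Derive_n F 2 x) ^ 2.

Lemma ln2 k t : (1 <= k)%nat -> U t -> Derive_n (fun s => ln (L_ser F k 1%nat s)) 2 t = Qf t.
Proof.
  intros Hk Ht.
  change (Derive_n (fun s => ln (L_ser F k 1%nat s)) 2 t) with
    (Derive (fun y => Derive (fun s => ln (L_ser F k 1%nat s)) y) t).
  assert (Hk0 : INR k <> 0) by (apply not_0_INR; lia).
  rewrite (Derive_ext_loc _ (fun y => Derive_n F 3 y * / Derive_n F 2 y)).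
  - rewrite Derive_mult.
    + rewrite Derive_inv.
      * change (Derive (Derive_n F 3) t) with (Derive_n F 4 t).
        change (Derive (Derive_n F 2) t) with (Derive_n F 3 t).
        unfold Qf. field. apply Rgt_not_eq, HF2; auto.
      * exact (HF 3 t Ht).
      * apply Rgt_not_eq, HF2; auto.
    + exact (HF 4 t Ht).
    + apply ex_derive_inv. exact (HF 3 t Ht). apply Rgt_not_eq, HF2; auto.
  - apply loc; auto. intros y Hy.
    assert (HF2y := HF2 y Hy).
    rewrite Dln.
    + rewrite (Derive_ext_loc _ (fun s => INR k * Derive_n F 2 s)).
      * rewrite Derive_scal. rewrite L_1 by auto.
        change (Derive (Derive_n F 2) y) with (Derive_n F 3 y). field. split; lra.
      * apply loc; auto. intros; apply L_1; auto.
    + apply (sm_exd U). apply (smf_L' U HU F HF HF2). auto. auto.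
    + rewrite L_1 by auto. apply Rmult_lt_0_compat. apply lt_0_INR; lia. auto.
Qed.

Lemma l2_closed k t : (1 <= k)%nat -> U t -> L_ser F k 2%nat t = 1 / 2 * INR k * (INR k - 1) * Qf t.
Proof.
  intros Hk Ht. rewrite L_formula by auto. simpl (Nat.eqb 2 1).
  rewrite (sum_eq _ (fun j => INR j * Qf t)).
  - rewrite sum_scal_r, sum_INR. destruct k as [|m]; [lia|].
    replace (S m - 1)%nat with m by lia. rewrite S_INR. field.
  - intros j Hj. destruct j. simpl; ring.
    rewrite DDlog_0 by (auto; lia). rewrite ln2 by (auto; lia). reflexivity.
Qed.

Definition Hf s := (Derive_n F 2 s * Derive_n F 4 s - (Derive_n F 3 s) ^ 2) / (Derive_n F 2 s) ^ 3.

Lemma m1_eq k s : m_coef F k 1%nat s = L_ser F k 2%nat s / L_ser F k 1%nat s.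
Proof.
  unfold m_coef, fps_log1p. simpl. unfold fps_mul, fps_one, l_coef. simpl.
  replace (1 / 1) with 1 by field. ring.
Qed.

Lemma m1_D k t : (1 <= k)%nat -> U t ->
  Derive_n (m_coef F k 1%nat) 2 t = (INR k - 1) / 2 * Derive_n Hf 2 t.
Proof.
  intros Hk Ht. rewrite <- Derive_n_scal_l. apply Derive_n_ext_loc. apply loc; auto.
  intros y Hy. rewrite m1_eq. rewrite l2_closed, L_1 by auto.
  assert (Hk0 : INR k <> 0) by (apply not_0_INR; lia).
  assert (H2 := HF2 y Hy). unfold Qf, Hf. field. split; lra.
Qed.

End T.


Lemma sum_cubic m : sum_f_R0 (fun j => INR j * ((INR (S m - j) - 1) / 2)) m =
  1 / 12 * INR (S m) * (INR (S m) - 1) * (INR (S m) - 2).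
Proof.
  rewrite (sum_eq _ (fun j => / 2 * (INR m * INR j - INR j * INR j))).
  - rewrite sum_scal_l, minus_sum, sum_scal_l, sum_INR, sum_sq, S_INR. field.
  - intros j Hj. rewrite minus_INR by lia. rewrite S_INR. field.
Qed.

Theorem mainTheorem5 (F : R -> R) (a b : Rbar) :
  Rbar_lt a b ->
  (forall (k : nat) (t : R), Rbar_lt a t -> Rbar_lt t b -> ex_derive_n F k t) ->
  (forall t : R, Rbar_lt a t -> Rbar_lt t b -> 0 < Derive_n F 2 t) ->
  forall (n : nat), (1 <= n)%nat ->
  forall t : R, Rbar_lt a t -> Rbar_lt t b ->
    l_coef F n 1 t = INR n * Derive_n F 2 t
    /\ l_coef F n 2 t =
         sum_f_R0 (fun j => INR j *
           Derive_n (fun s => ln (l_coef F (n - j) 1 s)) 2 t) (n - 1)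
    /\ (forall p : nat, (3 <= p)%nat ->
         l_coef F n p t =
           sum_f_R0 (fun j => INR j *
             Derive_n (m_coef F (n - j) (p - 2)) 2 t) (n - 1))
    /\ l_coef F n 2 t =
         1 / 2 * INR n * (INR n - 1) *
         ((Derive_n F 2 t * Derive_n F 4 t - (Derive_n F 3 t) ^ 2)
            / (Derive_n F 2 t) ^ 2)
    /\ l_coef F n 3 t =
         1 / 12 * INR n * (INR n - 1) * (INR n - 2) *
         Derive_n (fun s => (Derive_n F 2 s * Derive_n F 4 s - (Derive_n F 3 s) ^ 2)
                              / (Derive_n F 2 s) ^ 3) 2 t.
Proof.
  intros Hab HF0 HF20 n Hn t Hta Htb.
  set (U := fun x : R => Rbar_lt a x /\ Rbar_lt x b).
  assert (HU : open U) by (apply open_and; [apply open_Rbar_gt | apply open_Rbar_lt]).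
  assert (HF : forall k x, U x -> ex_derive_n F k x) by (intros k x [H1 H2]; auto).
  assert (HF2 : forall x, U x -> 0 < Derive_n F 2 x) by (intros x [H1 H2]; auto).
  assert (Ht : U t) by (split; auto).
  assert (H3 : forall p : nat, (3 <= p)%nat ->
         l_coef F n p t =
           sum_f_R0 (fun j => INR j *
             Derive_n (m_coef F (n - j) (p - 2)) 2 t) (n - 1)).
  { intros p Hp. destruct p as [|[|[|q']]]; try lia.
    unfold l_coef. rewrite L_formula by auto. simpl (Nat.eqb _ 1). rewrite Rplus_0_l.
    replace (S (S (S q')) - 2)%nat with (S q') by lia.
    apply sum_eq; intros j Hj. destruct j. simpl; ring.
    rewrite (DDlog_q U HU F HF HF2) by (auto; lia). reflexivity. }
  split; [|split; [|split; [|split]]].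
  - unfold l_coef. apply L_1; auto.
  - unfold l_coef. rewrite L_formula by auto. simpl (Nat.eqb 2 1). rewrite Rplus_0_l.
    apply sum_eq; intros j Hj. destruct j. simpl; ring.
    rewrite (DDlog_0 U HU F HF HF2) by (auto; lia). reflexivity.
  - exact H3.
  - unfold l_coef. rewrite (l2_closed U HU F HF HF2) by auto. reflexivity.
  - rewrite H3 by lia. simpl (3 - 2)%nat.
    rewrite (sum_eq _ (fun j => INR j * ((INR (n - j) - 1) / 2) *
       Derive_n (Hf F) 2 t)).
    + rewrite sum_scal_r. destruct n as [|m]; [lia|]. replace (S m - 1)%nat with m by lia.
      rewrite sum_cubic. unfold Hf. reflexivity.
    + intros j Hj. destruct j. simpl; ring.
      rewrite (m1_D U HU F HF HF2) by (auto; lia). ring.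
Qed.
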